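(* Let $G$ be a Roelcke-precompact Polish group. For $i\in\mathbf N$ let $X_i$ be minimal complete $G$-spaces and $x_i,y_i\in X_i$. Then there exist $\xi_i\in\widehat G_L$ ($i\in\mathbf N$) such that $\xi_ix_i=\xi_{i+1}y_i$ for all $i$. In particular, if $I$ is countable, $X$ is a minimal complete $G$-space and $x_i\in X$ for $i\in I$, then there exist $\xi_i\in\widehat G_L$ and $z\in X$ with $z=\xi_ix_i$ for all $i\in I$.
   Context: A complete $G$-space is a nonempty complete metric space with a jointly continuous action of $G$ by isometries; it is minimal if every orbit is dense. $\widehat G_L$ is the completion of $G$ with respect to a compatible left-invariant metric; the action of $G$ on any complete $G$-space extends continuously to an action of $\widehat G_L$. $G$ is Roelcke-precompact if for every open neighbourhood $U$ of $1$ there is finite $F\subseteq G$ with $UFU=G$. *)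

(* Defs.v *)
From Stdlib Require Import Reals List ClassicalEpsilon.
Open Scope R_scope.

Record is_metric {T : Type} (d : T -> T -> R) : Prop := {
  md_nonneg : forall x y, 0 <= d x y;
  md_refl : forall x, d x x = 0;
  md_sep : forall x y, d x y = 0 -> x = y;
  md_sym : forall x y, d x y = d y x;
  md_tri : forall x y z, d x z <= d x y + d y z }.

Definition is_open {T : Type} (d : T -> T -> R) (U : T -> Prop) : Prop :=
  forall x, U x -> exists eps, 0 < eps /\ forall y, d x y < eps -> U y.

Definition converges {T : Type} (d : T -> T -> R) (u : nat -> T) (l : T) : Prop :=
  forall eps, 0 < eps -> exists N, forall n, (N <= n)%nat -> d (u n) l < eps.

Definition cauchy {T : Type} (d : T -> T -> R) (u : nat -> T) : Prop :=
  forall eps, 0 < eps -> exists N, forall n m, (N <= n)%nat -> (N <= m)%nat ->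
    d (u n) (u m) < eps.

Definition complete {T : Type} (d : T -> T -> R) : Prop :=
  forall u, cauchy d u -> exists l, converges d u l.

Definition separable {T : Type} (d : T -> T -> R) : Prop :=
  exists s : nat -> T, forall x eps, 0 < eps -> exists n, d x (s n) < eps.

Definition same_topology {T : Type} (d1 d2 : T -> T -> R) : Prop :=
  forall U, is_open d1 U <-> is_open d2 U.

(** A metrizable topological group, given with a compatible left-invariant
    metric gd (its topology is the one induced by gd). *)
Record MetricGroup := {
  gcar :> Type;
  gmul : gcar -> gcar -> gcar;
  ginv : gcar -> gcar;
  gone : gcar;
  gd : gcar -> gcar -> R;
  gmulA : forall x y z, gmul x (gmul y z) = gmul (gmul x y) z;
  gmul1l : forall x, gmul gone x = x;
  gmulVl : forall x, gmul (ginv x) x = gone;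
  gd_metric : is_metric gd;
  gd_left_inv : forall g x y, gd (gmul g x) (gmul g y) = gd x y;
  gmul_cont : forall x y eps, 0 < eps -> exists delta, 0 < delta /\
     forall x' y', gd x x' < delta -> gd y y' < delta ->
       gd (gmul x y) (gmul x' y') < eps;
  ginv_cont : forall x eps, 0 < eps -> exists delta, 0 < delta /\
     forall x', gd x x' < delta -> gd (ginv x) (ginv x') < eps }.

Definition polish (G : MetricGroup) : Prop :=
  separable (gd G) /\
  exists rho : G -> G -> R, is_metric rho /\ complete rho /\ same_topology rho (gd G).

Definition roelcke_precompact (G : MetricGroup) : Prop :=
  forall U : G -> Prop, is_open (gd G) U -> U (gone G) ->
    exists F : list G, forall g : G, exists u f v,
      U u /\ In f F /\ U v /\ g = gmul G (gmul G u f) v.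

Record GSpace (G : MetricGroup) := {
  scar :> Type;
  sd : scar -> scar -> R;
  sact : G -> scar -> scar;
  sd_metric : is_metric sd;
  s_complete : complete sd;
  s_nonempty : inhabited scar;
  sact_one : forall x, sact (gone G) x = x;
  sact_mul : forall g h x, sact (gmul G g h) x = sact g (sact h x);
  sact_isom : forall g x y, sd (sact g x) (sact g y) = sd x y;
  sact_cont : forall g x eps, 0 < eps -> exists delta, 0 < delta /\
     forall g' x', gd G g g' < delta -> sd x x' < delta ->
       sd (sact g x) (sact g' x') < eps }.

Arguments sd {G} _ _ _.
Arguments sact {G} _ _ _.

Definition minimal {G : MetricGroup} (X : GSpace G) : Prop :=
  forall x y : X, forall eps, 0 < eps -> exists g : G, sd X (sact X g x) y < eps.

(** The left completion: its points are represented by gd-Cauchy sequences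
    (Cauchy sequences for the left-invariant metric); the equivalence
    relation identifying them is irrelevant for the statement. *)
Definition GhatL (G : MetricGroup) := { u : nat -> G | cauchy (gd G) u }.

(** Extended action: xi x = lim_n (u_n x) (chosen via epsilon; the limit
    exists and is unique). *)
Definition hact {G : MetricGroup} (X : GSpace G) (xi : GhatL G) (x : X) : X :=
  epsilon (inhabits x)
    (fun z => converges (sd X) (fun n => sact X (proj1_sig xi n) x) z).

(* Main.v *)
Require Import Defs.
From Stdlib Require Import Reals List Lra Lia Classical ClassicalEpsilon.
Open Scope R_scope.
Local Notation "a ** b" := (gmul _ a b) (at level 40, left associativity).



Lemma g_mulVr {G : MetricGroup} (a : G) : a ** ginv G a = gone G.
Proof.
  pose (e := a ** ginv G a).
  assert (He : e ** e = e).
  { unfold e. rewrite <- gmulA. rewrite (gmulA G (ginv G a) a), gmulVl, gmul1l. reflexivity. }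
  change (e = gone G). rewrite <- (gmul1l G e). rewrite <- (gmulVl G e) at 1.
  rewrite <- gmulA, He. apply gmulVl.
Qed.

Lemma g_mul1r {G : MetricGroup} (a : G) : a ** gone G = a.
Proof. rewrite <- (gmulVl G a), gmulA, g_mulVr, gmul1l. reflexivity. Qed.

Lemma g_mulKl {G : MetricGroup} (x a : G) : x ** ginv G a ** a = x.
Proof. rewrite <- gmulA, gmulVl, g_mul1r. reflexivity. Qed.
Lemma g_mulKr {G : MetricGroup} (x a : G) : x ** a ** ginv G a = x.
Proof. rewrite <- gmulA, g_mulVr, g_mul1r. reflexivity. Qed.

Ltac gsimpl := repeat (rewrite ?gmulA, ?g_mulKl, ?g_mulKr, ?g_mul1r, ?gmul1l, ?gmulVl, ?g_mulVr).

Lemma ginv_one {G : MetricGroup} : ginv G (gone G) = gone G.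
Proof. rewrite <- (g_mul1r (ginv G (gone G))). apply gmulVl. Qed.

Lemma gd_tri {G : MetricGroup} (a b c : G) : gd G a c <= gd G a b + gd G b c.
Proof. apply (md_tri _ (gd_metric G)). Qed.
Lemma gd_sym {G : MetricGroup} (a b : G) : gd G a b = gd G b a.
Proof. apply (md_sym _ (gd_metric G)). Qed.
Lemma gd_refl {G : MetricGroup} (a : G) : gd G a a = 0.
Proof. apply (md_refl _ (gd_metric G)). Qed.
Lemma gd_nonneg {G : MetricGroup} (a b : G) : 0 <= gd G a b.
Proof. apply (md_nonneg _ (gd_metric G)). Qed.

Lemma gd_one {G : MetricGroup} (a b : G) : gd G a b = gd G (gone G) (ginv G a ** b).
Proof.
  rewrite <- (gd_left_inv G a (gone G) (ginv G a ** b)). gsimpl. reflexivity.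
Qed.

Lemma gd_one_mul {G : MetricGroup} (a b : G) :
  gd G (gone G) (a ** b) <= gd G (gone G) a + gd G (gone G) b.
Proof.
  eapply Rle_trans. apply (gd_tri _ a).
  rewrite <- (gd_left_inv G a (gone G) b), g_mul1r. lra.
Qed.

Lemma ball_open {G : MetricGroup} (r : R) : is_open (gd G) (fun a => gd G (gone G) a < r).
Proof.
  intros a Ha. exists (r - gd G (gone G) a). split. lra.
  intros y Hy. pose proof (gd_tri (gone G) a y). lra.
Qed.

Lemma conj_small {G : MetricGroup} (t : G) eps : 0 < eps -> exists rho, 0 < rho /\
  forall c, gd G (gone G) c < rho -> gd G (gone G) (ginv G t ** (ginv G c ** t)) < eps.
Proof.
  intros He.
  destruct (gmul_cont G (gone G) t eps He) as [d1 [Hd1 H1]].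
  destruct (ginv_cont G (gone G) d1 Hd1) as [d2 [Hd2 H2]].
  exists d2. split; auto. intros c Hc.
  rewrite <- gd_one. specialize (H2 c Hc). rewrite ginv_one in H2.
  specialize (H1 (ginv G c) t H2). rewrite gd_refl in H1. specialize (H1 Hd1).
  rewrite gmul1l in H1. exact H1.
Qed.

Lemma conj_small_list {G : MetricGroup} (L : list G) eps : 0 < eps -> exists rho, 0 < rho /\
  forall t, In t L -> forall c, gd G (gone G) c < rho -> gd G (gone G) (ginv G t ** (ginv G c ** t)) < eps.
Proof.
  intros He. induction L as [|t L IH].
  - exists 1. split. lra. intros t [].
  - destruct IH as [r1 [Hr1 H1]]. destruct (conj_small t eps He) as [r2 [Hr2 H2]].
    exists (Rmin r1 r2). split. apply Rmin_pos; auto.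
    intros t' [<-|Ht'] c Hc.
    + apply H2. pose proof (Rmin_r r1 r2). lra.
    + apply H1; auto. pose proof (Rmin_l r1 r2). lra.
Qed.


Lemma decomp {G : MetricGroup} (HR : roelcke_precompact G) : forall n delta, 0 < delta ->
  exists T : list (nat -> G), forall g : nat -> G, exists h t b, In t T /\
    forall i, (i <= n)%nat -> gd G (gone G) (b i) < delta /\ g i = h ** (t i ** b i).
Proof.
  induction n as [|n IH]; intros delta Hd.
  - exists ((fun _ => gone G) :: nil). intros g. exists (g 0%nat), (fun _ => gone G), (fun _ => gone G).
    split. left; reflexivity. intros i Hi. assert (i = 0%nat) by lia. subst i.
    rewrite gd_refl. split. lra. gsimpl. reflexivity.
  - destruct (IH (delta/2)) as [T HT]. lra.
    destruct (conj_small_list (flat_map (fun t => map t (seq 0 (S n))) T) (delta/2))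
      as [rho [Hrho Hc]]. lra.
    destruct (HR (fun a => gd G (gone G) a < Rmin rho (delta/2))) as [F HF].
    apply ball_open. rewrite gd_refl. apply Rmin_pos; lra.
    exists (flat_map (fun t => map (fun f => fun i => if Nat.eqb i (S n) then f else t i) F) T).
    intros g. destruct (HT g) as [h [t [b [Ht Hb]]]].
    destruct (HF (ginv G h ** g (S n))) as [u [f [v [Hu [Hf [Hv Huv]]]]]].
    exists (h ** u), (fun i => if Nat.eqb i (S n) then f else t i),
      (fun i => if Nat.eqb i (S n) then v else ginv G (t i) ** (ginv G u ** (t i ** b i))).
    split.
    + apply in_flat_map. exists t. split; auto. apply in_map_iff. exists f. split; auto.
    + intros i Hi. destruct (Nat.eqb i (S n)) eqn:E.
      * apply Nat.eqb_eq in E. subst i. split.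
        pose proof (Rmin_r rho (delta/2)). lra.
        transitivity (h ** (ginv G h ** g (S n))). gsimpl. reflexivity.
        rewrite Huv. gsimpl. reflexivity.
      * apply Nat.eqb_neq in E. assert (Hi' : (i <= n)%nat) by lia.
        destruct (Hb i Hi') as [Hbi Hgi]. split.
        -- replace (ginv G (t i) ** (ginv G u ** (t i ** b i))) with
             ((ginv G (t i) ** (ginv G u ** t i)) ** b i) by (gsimpl; reflexivity).
           eapply Rle_lt_trans. apply gd_one_mul.
           assert (gd G (gone G) (ginv G (t i) ** (ginv G u ** t i)) < delta/2).
           { apply Hc. apply in_flat_map. exists t. split; auto. apply in_map_iff.
             exists i. split; auto. apply in_seq. lia.
             pose proof (Rmin_l rho (delta/2)). lra. }
           lra.
        -- rewrite Hgi. gsimpl. reflexivity.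
Qed.


Definition err {G : MetricGroup} (X : nat -> GSpace G) (x y : forall i, X i) (g : nat -> G) (i : nat) : R :=
  sd (X i) (sact (X i) (g i) (x i)) (sact (X i) (g (S i)) (y i)).

Lemma err_left {G : MetricGroup} X x y (h : G) (c : nat -> G) i :
  err X x y (fun j => h ** c j) i = err X x y c i.
Proof. unfold err. rewrite !sact_mul, sact_isom. reflexivity. Qed.

Lemma err_ext {G : MetricGroup} X x y (c c' : nat -> G) i :
  c i = c' i -> c (S i) = c' (S i) -> err X x y c i = err X x y c' i.
Proof. intros H1 H2. unfold err. rewrite H1, H2. reflexivity. Qed.

Definition good {G : MetricGroup} X x y n delta (t : nat -> G) : Prop :=
  forall theta, 0 < theta -> exists b : nat -> G,
    (forall i, (i <= n)%nat -> gd G (gone G) (b i) < delta) /\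
    forall i, (i < n)%nat -> err X x y (fun j => t j ** b j) i < theta.

Definition bad {G : MetricGroup} X x y n delta eta (t : nat -> G) : Prop :=
  forall b : nat -> G, (forall i, (i <= n)%nat -> gd G (gone G) (b i) < delta) ->
    exists i, (i < n)%nat /\ eta <= err X x y (fun j => t j ** b j) i.

Lemma good_or_bad {G : MetricGroup} X x y n delta (T : list (nat -> G)) :
  exists eta, 0 < eta /\ forall t, In t T -> good X x y n delta t \/ bad X x y n delta eta t.
Proof.
  induction T as [|t T IH].
  - exists 1. split. lra. intros t [].
  - destruct IH as [e1 [He1 H1]].
    destruct (classic (good X x y n delta t)) as [Hg|Hg].
    + exists e1. split; auto. intros t' [<-|Ht]. left; auto. apply H1; auto.
    + unfold good in Hg. apply not_all_ex_not in Hg. destruct Hg as [th Hth].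
      apply imply_to_and in Hth. destruct Hth as [Hth Hn].
      exists (Rmin e1 th). split. apply Rmin_pos; auto. intros t' [<-|Ht].
      * right. intros b Hb. apply NNPP. intro Hc. apply Hn. exists b. split; auto.
        intros i Hi. apply Rnot_le_lt. intro Hle. apply Hc. exists i. split; auto.
        pose proof (Rmin_r e1 th). lra.
      * destruct (H1 t' Ht) as [Hg|Hb]. left; auto. right. intros b Hbb.
        destruct (Hb b Hbb) as [i [Hi Hei]]. exists i. split; auto.
        pose proof (Rmin_l e1 th). lra.
Qed.

Lemma stepP {G : MetricGroup} (HR : roelcke_precompact G) (X : nat -> GSpace G)
  (x y : forall i, X i) : forall n delta, 0 < delta -> exists eta, 0 < eta /\
  forall g : nat -> G, (forall i, (i < n)%nat -> err X x y g i < eta) ->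
  forall theta, 0 < theta -> exists r : nat -> G,
    (forall i, (i <= n)%nat -> gd G (gone G) (r i) < delta) /\
    forall i, (i < n)%nat -> err X x y (fun j => g j ** r j) i < theta.
Proof.
  intros n delta Hd.
  destruct (decomp HR n (delta/2)) as [T HT]. lra.
  destruct (good_or_bad X x y n (delta/2) T) as [eta [Heta Hgb]].
  exists eta. split; auto. intros g Hg theta Hth.
  destruct (HT g) as [h [t [b [Ht Hb]]]].
  assert (Herr : forall i, (i < n)%nat -> err X x y g i = err X x y (fun j => t j ** b j) i).
  { intros i Hi. rewrite <- (err_left X x y h (fun j => t j ** b j)).
    apply err_ext; apply (Hb _); lia. }
  destruct (Hgb t Ht) as [Hgood|Hbad].
  - destruct (Hgood theta Hth) as [b' [Hb' He']].
    exists (fun j => ginv G (b j) ** b' j). split.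
    + intros i Hi. rewrite <- gd_one. eapply Rle_lt_trans. apply (gd_tri _ (gone G)).
      rewrite gd_sym. destruct (Hb i Hi). specialize (Hb' i Hi). lra.
    + intros i Hi. eapply Rle_lt_trans; [|apply (He' i Hi)]. right.
      rewrite <- (err_left X x y h (fun j => t j ** b' j)).
      apply err_ext.
      * destruct (Hb i) as [_ E]. lia. rewrite E. gsimpl. reflexivity.
      * destruct (Hb (S i)) as [_ E]. lia. rewrite E. gsimpl. reflexivity.
  - exfalso. destruct (Hbad b) as [i [Hi Hle]].
    intros i Hi. apply (Hb i Hi).
    specialize (Hg i Hi). rewrite Herr in Hg by auto. lra.
Qed.


Lemma cauchy_geom {T : Type} (d : T -> T -> R) (Hd : is_metric d) (u : nat -> T) K :
  (forall m, (K <= m)%nat -> d (u m) (u (S m)) < (/2)^m) -> cauchy d u.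
Proof.
  intros H.
  assert (A : forall k m, (K <= m)%nat -> d (u m) (u (m + k)%nat) <= 2 * ((/2)^m - (/2)^(m+k))).
  { induction k as [|k IH]; intros m Hm.
    - rewrite Nat.add_0_r, (md_refl _ Hd). lra.
    - eapply Rle_trans. apply (md_tri _ Hd _ (u (m+k)%nat)).
      replace (m + S k)%nat with (S (m + k)) by lia.
      pose proof (H (m+k)%nat ltac:(lia)). pose proof (IH m Hm).
      simpl. lra. }
  assert (B : forall m n, (K <= m)%nat -> (m <= n)%nat -> d (u m) (u n) <= 2 * (/2)^m).
  { intros m n Hm Hn. replace n with (m + (n - m))%nat by lia.
    eapply Rle_trans. apply A; auto. pose proof (pow_le (/2) (m + (n-m))). lra. }
  intros eps Heps.
  destruct (pow_lt_1_zero (/2) ltac:(rewrite Rabs_right; lra) (eps/4) ltac:(lra)) as [N0 HN0].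
  exists (Nat.max K N0). intros n m Hn Hm.
  eapply Rle_lt_trans. apply (md_tri _ Hd _ (u (Nat.max K N0))).
  rewrite (md_sym _ Hd (u n)).
  pose proof (B (Nat.max K N0) n ltac:(lia) Hn). pose proof (B (Nat.max K N0) m ltac:(lia) Hm).
  pose proof (HN0 (Nat.max K N0) ltac:(lia)). rewrite Rabs_right in H2.
  lra. apply Rle_ge, pow_le; lra.
Qed.

Lemma act_cauchy {G : MetricGroup} (X : GSpace G) (u : nat -> G) (p : X) :
  cauchy (gd G) u -> cauchy (sd X) (fun n => sact X (u n) p).
Proof.
  intros Hu eps Heps.
  destruct (sact_cont G X (gone G) p eps Heps) as [dl [Hdl Hc]].
  destruct (Hu dl Hdl) as [N HN]. exists N. intros n m Hn Hm. simpl.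
  rewrite <- (sact_isom G X (ginv G (u n))), <- !sact_mul, gmulVl, sact_one.
  specialize (Hc (ginv G (u n) ** u m) p). rewrite sact_one in Hc.
  apply Hc. rewrite <- gd_one. apply HN; auto. rewrite (md_refl _ (sd_metric G X)). auto.
Qed.

Lemma limit_unique {T : Type} (d : T -> T -> R) (Hd : is_metric d) u l1 l2 :
  converges d u l1 -> converges d u l2 -> l1 = l2.
Proof.
  intros H1 H2. apply (md_sep _ Hd). apply Rle_antisym; [|apply (md_nonneg _ Hd)].
  apply Rnot_lt_le. intro Hlt.
  destruct (H1 (d l1 l2 / 2) ltac:(lra)) as [N1 HN1].
  destruct (H2 (d l1 l2 / 2) ltac:(lra)) as [N2 HN2].
  specialize (HN1 (Nat.max N1 N2) ltac:(lia)). specialize (HN2 (Nat.max N1 N2) ltac:(lia)).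
  pose proof (md_tri _ Hd l1 (u (Nat.max N1 N2)) l2). rewrite (md_sym _ Hd l1 (u (Nat.max N1 N2))) in H. lra.
Qed.

Lemma hact_spec {G : MetricGroup} (X : GSpace G) (xi : GhatL G) (p : X) :
  converges (sd X) (fun n => sact X (proj1_sig xi n) p) (hact X xi p).
Proof.
  unfold hact. apply epsilon_spec.
  apply (s_complete G X). apply act_cauchy. apply (proj2_sig xi).
Qed.


Lemma build_seq {A : Type} (I : nat -> A -> Prop) (Q : nat -> A -> A -> Prop) (a0 : A) :
  I 0%nat a0 -> (forall n a, I n a -> exists a', I (S n) a' /\ Q n a a') ->
  exists s : nat -> A, forall n, I n (s n) /\ Q n (s n) (s (S n)).
Proof.
  intros H0 H.
  pose (F := fun n (p : {a | I n a}) => constructive_indefinite_description _ (H n _ (proj2_sig p))).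
  pose (Sq := nat_rect (fun n => {a | I n a}) (exist _ a0 H0)
      (fun n p => exist _ (proj1_sig (F n p)) (proj1 (proj2_sig (F n p))))).
  exists (fun n => proj1_sig (Sq n)). intros n. split.
  - apply (proj2_sig (Sq n)).
  - exact (proj2 (proj2_sig (F n (Sq n)))).
Qed.

Lemma half_pow_pos n : 0 < (/2)^n.
Proof. apply pow_lt. lra. Qed.

Theorem chain {G : MetricGroup} (HR : roelcke_precompact G) (X : nat -> GSpace G)
  (Hmin : forall i, minimal (X i)) (x y : forall i, X i) :
  exists xi : nat -> GhatL G, forall i, hact (X i) (xi i) (x i) = hact (X i) (xi (S i)) (y i).
Proof.
  pose (etaf := fun n => proj1_sig (constructive_indefinite_description _
          (stepP HR X x y n ((/2)^n) (half_pow_pos n)))).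
  assert (Heta : forall n, 0 < etaf n /\
    forall g : nat -> G, (forall i, (i < n)%nat -> err X x y g i < etaf n) ->
    forall theta, 0 < theta -> exists r : nat -> G,
      (forall i, (i <= n)%nat -> gd G (gone G) (r i) < (/2)^n) /\
      forall i, (i < n)%nat -> err X x y (fun j => g j ** r j) i < theta).
  { intros n. exact (proj2_sig (constructive_indefinite_description _
          (stepP HR X x y n ((/2)^n) (half_pow_pos n)))). }
  clearbody etaf.
  pose (eps := fun n => Rmin (etaf n) ((/2)^n)).
  assert (Heps : forall n, 0 < eps n).
  { intros n. apply Rmin_pos. apply Heta. apply half_pow_pos. }
  destruct (build_seq (fun n g => forall i, (i < n)%nat -> err X x y g i < eps n)
     (fun n g g' => forall j, (j <= n)%nat -> gd G (g j) (g' j) < (/2)^n)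
     (fun _ => gone G)) as [s Hs].
  { intros i Hi. lia. }
  { intros n g Hg.
    destruct (proj2 (Heta n) g) with (theta := eps (S n)) as [r [Hr1 Hr2]].
    intros i Hi. pose proof (Hg i Hi). pose proof (Rmin_l (etaf n) ((/2)^n)). unfold eps in *. lra.
    apply Heps.
    destruct (Hmin n (y n) (sact (X n) (g n ** r n) (x n)) (eps (S n)) (Heps _)) as [k Hk].
    exists (fun j => if Nat.leb j n then g j ** r j else k). split.
    - intros i Hi. destruct (Nat.eq_dec i n) as [->|Hne].
      + unfold err. rewrite Nat.leb_refl. replace (Nat.leb (S n) n) with false
          by (symmetry; apply Nat.leb_gt; lia).
        rewrite (md_sym _ (sd_metric G (X n))). exact Hk.
      + eapply Rle_lt_trans; [|apply (Hr2 i ltac:(lia))]. right. apply err_ext.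
        * replace (Nat.leb i n) with true by (symmetry; apply Nat.leb_le; lia). reflexivity.
        * replace (Nat.leb (S i) n) with true by (symmetry; apply Nat.leb_le; lia). reflexivity.
    - intros j Hj. replace (Nat.leb j n) with true by (symmetry; apply Nat.leb_le; lia).
      rewrite gd_one. gsimpl. apply Hr1; auto. }
  assert (Hc : forall j, cauchy (gd G) (fun m => s m j)).
  { intros j. apply (cauchy_geom _ (gd_metric G) _ j). intros m Hm. apply (proj2 (Hs m)). lia. }
  exists (fun j => exist _ (fun m => s m j) (Hc j)).
  intros i.
  apply (limit_unique _ (sd_metric G (X i)) (fun m => sact (X i) (s m (S i)) (y i))).
  2: apply (hact_spec (X i) (exist _ (fun m => s m (S i)) (Hc (S i)))).
  pose proof (hact_spec (X i) (exist _ (fun m => s m i) (Hc i)) (x i)) as HL.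
  simpl in HL. set (L := hact _ _ _) in *. clearbody L.
  intros e He. destruct (HL (e/2) ltac:(lra)) as [N1 HN1].
  destruct (pow_lt_1_zero (/2) ltac:(rewrite Rabs_right; lra) (e/2) ltac:(lra)) as [N0 HN0].
  exists (Nat.max N1 (Nat.max N0 (S i))). intros m Hm.
  eapply Rle_lt_trans. apply (md_tri _ (sd_metric G (X i)) _ (sact (X i) (s m i) (x i))).
  rewrite (md_sym _ (sd_metric G (X i)) (sact (X i) (s m (S i)) (y i))).
  pose proof (HN1 m ltac:(lia)). pose proof (proj1 (Hs m) i ltac:(lia)).
  pose proof (Rmin_r (etaf m) ((/2)^m)). pose proof (HN0 m ltac:(lia)).
  rewrite Rabs_right in H2 by (apply Rle_ge, pow_le; lra).
  unfold err, eps in *. simpl in *. lra.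
Qed.


Theorem lemma1p10 (G : MetricGroup) (HP : polish G) (HR : roelcke_precompact G) :
  (forall (X : nat -> GSpace G), (forall i, minimal (X i)) ->
   forall (x y : forall i, X i),
   exists xi : nat -> GhatL G,
     forall i, hact (X i) (xi i) (x i) = hact (X i) (xi (S i)) (y i))
  /\
  (forall (I : Type) (c : I -> nat), (forall i j, c i = c j -> i = j) ->
   forall (X : GSpace G), minimal X ->
   forall x : I -> X,
   exists (xi : I -> GhatL G) (z : X), forall i, z = hact X (xi i) (x i)).
Proof.
  split.
  - intros X Hm x y. apply chain; auto.
  - intros I c Hc X Hm x.
    destruct (s_nonempty G X) as [x0].
    pose (a := fun n : nat => match excluded_middle_informative (exists i, c i = n) with
               | left H => x (proj1_sig (constructive_indefinite_description _ H))
               | right _ => x0 end).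
    assert (Ha : forall i, a (c i) = x i).
    { intros i. unfold a. destruct (excluded_middle_informative (exists j, c j = c i)) as [H|H].
      - destruct (constructive_indefinite_description _ H) as [j Hj]. simpl.
        rewrite (Hc _ _ Hj). reflexivity.
      - exfalso. apply H. exists i. reflexivity. }
    destruct (chain HR (fun _ => X) (fun _ => Hm) a (fun n => a (S n))) as [xi Hxi].
    exists (fun i => xi (c i)), (hact X (xi 0%nat) (a 0%nat)).
    intros i. rewrite <- Ha.
    generalize (c i). induction n as [|n IH]. reflexivity.
    rewrite IH. apply (Hxi n).
Qed.
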